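(* Let $s\in\{0,\tfrac12\}$, $\lambda\in\mathbb{C}$, and let $\sigma\in\mathrm{Aut}(\mathfrak{L}^s_\lambda)$ be normalized, i.e. there are $\epsilon\in\{1,-1\}$, $\alpha,\mu\in\mathbb{C}\setminus\{0\}$, $\beta\in\mathbb{C}$ with $\sigma(L_m)=\epsilon\alpha^mL_{\epsilon m}+m\alpha^m\beta I_{\epsilon m}$ and $\sigma(I_m)=\alpha^m\mu I_{\epsilon m}$ for all $m\in\mathbb{Z}$. Then for every $p\in s+\mathbb{Z}$, $\sigma(G_p)\in\mathbb{C}G_{\epsilon p}+\mathrm{span}_{\mathbb{C}}\{H_q:q\in s+\mathbb{Z}\}$.
   Context: For $s\in\{0,\tfrac12\}$ and $\lambda\in\mathbb{C}$, $\mathfrak{L}^s_\lambda$ is the complex Lie superalgebra with basis $\{L_m,I_m,G_p,H_p : m\in\mathbb{Z},\ p\in s+\mathbb{Z}\}$, even part spanned by the $L_m,I_m$, odd part spanned by the $G_p,H_p$, with brackets $[L_m,L_n]=(m-n)L_{m+n}$, $[L_m,I_n]=(m-n)I_{m+n}$, $[L_m,H_p]=(\tfrac m2-p)H_{m+p}$, $[L_m,G_p]=(\tfrac m2-p)G_{m+p}+\lambda(m+1)H_{m+p}$, $[I_m,G_p]=(m-2p)H_{m+p}$, $[G_p,G_q]=I_{p+q}$, plus super-antisymmetry; all other brackets of basis elements are zero. $\mathrm{Aut}(\mathfrak{L})$ is the group of bijective parity-preserving linear maps $\sigma$ with $\sigma([x,y])=[\sigma(x),\sigma(y)]$. *)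

(* Defs.v *)
From HB Require Import structures.
From mathcomp Require Import all_boot all_order all_algebra.
Set Implicit Arguments. Unset Strict Implicit. Unset Printing Implicit Defensive.
Import Order.TTheory GRing.Theory Num.Theory.
Local Open Scope ring_scope.

(* The parameter [half : bool] encodes s:
   half = false <-> s = 0, half = true <-> s = 1/2.
   BL m = L_m, BI m = I_m (m : int);
   BG k = G_(k+s), BH k = H_(k+s) (k : int), i.e. odd indices p = k + s. *)
Inductive basis := BL of int | BI of int | BG of int | BH of int.

Definition basis_eqb (a b : basis) : bool :=
  match a, b with
  | BL m, BL n => m == n
  | BI m, BI n => m == n
  | BG m, BG n => m == n
  | BH m, BH n => m == n
  | _, _ => false
  end.

Definition is_even (b : basis) : bool :=
  match b with BL _ | BI _ => true | _ => false end.

(* Elements of the algebra are finite formal linear combinations of basis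
   elements, compared through their coefficients. *)
Definition coef (C : fieldType) (x : seq (C * basis)) (b : basis) : C :=
  \sum_(t <- x) (if basis_eqb t.2 b then t.1 else 0).

Definition eqv (C : fieldType) (x y : seq (C * basis)) : Prop :=
  forall b, coef x b = coef y b.

Definition scale (C : fieldType) (c : C) (x : seq (C * basis)) :=
  [seq (c * t.1, t.2) | t <- x].

Definition sval (C : fieldType) (half : bool) : C := if half then 2%:R^-1 else 0.
Definition pval (C : fieldType) (half : bool) (k : int) : C := k%:~R + sval C half.

(* bracket of basis elements (all ordered pairs, super-antisymmetry built in) *)
Definition br (C : fieldType) (half : bool) (lam : C) (a b : basis)
  : seq (C * basis) :=
  match a, b with
  | BL m, BL n => [:: ((m - n)%:~R, BL (m + n))]
  | BL m, BI n => [:: ((m - n)%:~R, BI (m + n))]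
  | BI n, BL m => [:: (- (m - n)%:~R, BI (m + n))]
  | BL m, BH k => [:: (m%:~R / 2%:R - pval C half k, BH (m + k))]
  | BH k, BL m => [:: (- (m%:~R / 2%:R - pval C half k), BH (m + k))]
  | BL m, BG k => [:: (m%:~R / 2%:R - pval C half k, BG (m + k));
                      (lam * (m + 1)%:~R, BH (m + k))]
  | BG k, BL m => [:: (- (m%:~R / 2%:R - pval C half k), BG (m + k));
                      (- (lam * (m + 1)%:~R), BH (m + k))]
  | BI m, BG k => [:: (m%:~R - 2%:R * pval C half k, BH (m + k))]
  | BG k, BI m => [:: (- (m%:~R - 2%:R * pval C half k), BH (m + k))]
  | BG k, BG l => [:: (1, BI (k + l + (half : nat)%:Z))]
  | _, _ => [::]
  end.

Definition brv (C : fieldType) (half : bool) (lam : C) (x y : seq (C * basis))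
  : seq (C * basis) :=
  flatten [seq scale (s.1 * t.1) (br half lam s.2 t.2) | s <- x, t <- y].

Definition apply (C : fieldType) (f : basis -> seq (C * basis)) (x : seq (C * basis))
  : seq (C * basis) :=
  flatten [seq scale t.1 (f t.2) | t <- x].

Definition is_aut (C : fieldType) (half : bool) (lam : C)
  (f : basis -> seq (C * basis)) : Prop :=
  [/\ (forall b b', is_even b != is_even b' -> coef (f b) b' = 0),
      (forall x y, eqv (apply f x) (apply f y) -> eqv x y),
      (forall y, exists x, eqv (apply f x) y) &
      (forall x y, eqv (apply f (brv half lam x y))
                       (brv half lam (apply f x) (apply f y)))].

(* index k' with k' + s = eps * (k + s), for eps in {1,-1} *)
Definition eps_odd (half : bool) (eps : int) (k : int) : int :=
  if eps == 1 then k else - k - (half : nat)%:Z.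

(* Main.v *)
Require Import Defs.
From HB Require Import structures.
From mathcomp Require Import all_boot all_order all_algebra.
From mathcomp Require Import zify ring.
Import Order.TTheory GRing.Theory Num.Theory.
Local Open Scope ring_scope.

Module Helpers.
Set Implicit Arguments. Unset Strict Implicit.
Lemma basis_eqbP : Equality.axiom basis_eqb.
Proof.
case=> m [] n /=; try (by constructor); apply: (iffP eqP) => [->|[]] //.
Qed.
HB.instance Definition _ := hasDecEq.Build basis basis_eqbP.

Section S.
Variable C : fieldType.
Implicit Types x y : seq (C * basis).

Lemma cf_nil b : coef ([::] : seq (C * basis)) b = 0.
Proof. by rewrite /coef big_nil. Qed.

Lemma cf_cons t x b : coef (t :: x) b = (if t.2 == b then t.1 else 0) + coef x b.
Proof. by rewrite /coef big_cons. Qed.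

Lemma cf_cat x y b : coef (x ++ y) b = coef x b + coef y b.
Proof. by rewrite /coef big_cat. Qed.

Lemma cf_scale c x b : coef (scale c x) b = c * coef x b.
Proof.
elim: x => [|t x IH]; first by rewrite /scale /= cf_nil mulr0.
rewrite /scale /= cf_cons -/(scale c x) IH cf_cons mulrDr /=.
by case: (t.2 == b); rewrite ?mulr0.
Qed.

Lemma cf_flatten (L : seq (seq (C * basis))) b :
  coef (flatten L) b = \sum_(l <- L) coef l b.
Proof.
elim: L => [|l L IH]; first by rewrite /= cf_nil big_nil.
by rewrite /= cf_cat IH big_cons.
Qed.

Lemma cf_apply (f : basis -> seq (C * basis)) x b :
  coef (apply f x) b = \sum_(t <- x) t.1 * coef (f t.2) b.
Proof.
rewrite /apply cf_flatten big_map; apply: eq_bigr => t _; exact: cf_scale.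
Qed.

Lemma cf_brv half lam x y b :
  coef (brv half lam x y) b =
  \sum_(s <- x) s.1 * \sum_(t <- y) t.1 * coef (br half lam s.2 t.2) b.
Proof.
rewrite /brv cf_flatten big_flatten /= big_map; apply: eq_bigr => s _.
rewrite big_map mulr_sumr; apply: eq_bigr => t _.
rewrite cf_scale; ring.
Qed.

Lemma sum_pick (G : basis -> C) (S : seq basis) (c : basis) (v : C) :
  uniq S ->
  \sum_(i <- S) G i * (if c == i then v else 0) = (if c \in S then v * G c else 0).
Proof.
elim: S => [|a S IH] /= uS; first by rewrite big_nil.
case/andP: uS => aS uS.
rewrite big_cons inE IH //.
case: eqP => [E|NE] /=.
  rewrite -E; have -> : (c \in S) = false by apply/negbTE; rewrite E.
  by rewrite addr0 mulrC.
by rewrite mulr0 add0r.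
Qed.

Lemma sum_supp (G : basis -> C) (S : seq basis) x :
  uniq S -> (forall a, a \notin S -> G a = 0) ->
  \sum_(s <- x) s.1 * G s.2 = \sum_(a <- S) G a * coef x a.
Proof.
move=> uS H0.
under [RHS]eq_bigr => a _ do rewrite /coef big_distrr.
rewrite exchange_big /=; apply: eq_bigr => s _.
rewrite sum_pick //.
by case: ifP => // /negbT /H0 ->; rewrite mulr0.
Qed.

End S.

Definition idx (b : basis) : int := match b with BL m | BI m | BG m | BH m => m end.
Definition cand (half : bool) (c b : basis) : seq basis :=
  let d := idx b - idx c in let d' := d - (half : nat)%:Z in
  [:: BL d; BI d; BG d; BH d; BL d'; BI d'; BG d'; BH d'].

Lemma eqbE (a b : basis) : (a == b) = basis_eqb a b. Proof. by []. Qed.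

Lemma br_supp (C : fieldType) half (lam : C) a c b :
  a \notin cand half c b -> coef (br half lam a c) b = 0.
Proof.
case: a => m; case: c => n; case: b => i;
rewrite /cand /= !inE ?eqbE /= ?cf_cons ?cf_nil /= ?eqbE /=;
move=> H; rewrite ?addr0; try done; move: H;
move=> H; rewrite ?add0r; case: eqP => // E; exfalso; move/negP: H; apply;
apply/orP; first [ left; apply/eqP; lia | right; apply/orP; left; apply/eqP; lia
  | right; apply/eqP; lia ].
Qed.

Lemma brv_eqv_l (C : fieldType) half (lam : C) x x' y b :
  eqv x x' -> coef (brv half lam x y) b = coef (brv half lam x' y) b.
Proof.
move=> E; rewrite !cf_brv.
set G := fun a => \sum_(t <- y) t.1 * coef (br half lam a t.2) b.
set S := undup (flatten [seq cand half t.2 b | t <- y]).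
have uS : uniq S by exact: undup_uniq.
have H0 : forall a, a \notin S -> G a = 0.
  move=> a aS; rewrite /G big1_seq // => t /andP [_ ty].
  rewrite br_supp ?mulr0 //; apply: contra aS => aC.
  rewrite mem_undup; apply/flatten_mapP; by exists t.
rewrite (sum_supp (G:=G) x uS H0) (sum_supp (G:=G) x' uS H0).
by apply: eq_bigr => a _; rewrite E.
Qed.

Lemma brI_noG (C : fieldType) half (lam : C) n c q :
  coef (br half lam (BI n) c) (BG q) = 0.
Proof. by case: c => i; rewrite /= ?cf_cons ?cf_nil ?eqbE /= ?addr0. Qed.

Lemma brL_supp (C : fieldType) half (lam : C) n c q :
  c \notin [:: BG (q - n)] -> coef (br half lam (BL n) c) (BG q) = 0.
Proof.
case: c => i; rewrite /= ?cf_cons ?cf_nil ?eqbE /= ?addr0 ?inE ?eqbE //=.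
move=> H; case: eqP => // E; exfalso; move: H; rewrite ?eqbE /= => /negP H; apply: H; apply/eqP; (try injection E as E); (try congr BG); lia.
Qed.

Lemma pval2 (C : numFieldType) half k :
  2 * pval C half k = (2 * k + (half : nat)%:Z)%:~R.
Proof.
rewrite /pval /sval; case: half => /=; rewrite ?intrD ?intrM /=.
  by field.
by ring.
Qed.

End Helpers.
Import Helpers.

Theorem lemma3p5 (C : numClosedFieldType) (half : bool) (lam : C)
  (f : basis -> seq (C * basis)) (eps : int) (alpha mu beta : C) :
  is_aut half lam f ->
  (eps = 1 \/ eps = -1) -> alpha != 0 -> mu != 0 ->
  (forall m : int, eqv (f (BL m))
     [:: (eps%:~R * alpha ^ m, BL (eps * m));
         (m%:~R * alpha ^ m * beta, BI (eps * m))]) ->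
  (forall m : int, eqv (f (BI m)) [:: (alpha ^ m * mu, BI (eps * m))]) ->
  forall k : int, exists (c : C) (h : seq (C * int)),
    eqv (f (BG k)) ((c, BG (eps_odd half eps k)) :: [seq (t.1, BH t.2) | t <- h]).
Proof.
move=> [Hpar _ _ Hhom] Heps Ha Hmu HL HI k.
have app1 : forall a b, coef (apply f [:: (1, a)]) b = coef (f a) b.
  by move=> a b; rewrite cf_apply big_cons big_nil mul1r addr0.
have HA : forall q, coef (f (BH k)) (BG q) = 0.
  move=> q.
  have [m Hm] : {m : int | m = 2 * k + (half : nat)%:Z + 1} by eexists.
  have := Hhom [:: (1, BI m)] [:: (1, BG (k - m))] (BG q).
  rewrite cf_apply /brv /= big_cons big_nil addr0.
  rewrite (_ : m + (k - m) = k); last by rewrite addrC subrK.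
  rewrite (@brv_eqv_l C half lam _ ([:: (alpha ^ m * mu, BI (eps * m))])); last first.
    by move=> b; rewrite app1 HI.
  rewrite cf_brv big_cons big_nil addr0.
  rewrite big1_seq ?mulr0; last by move=> t _; rewrite brI_noG mulr0.
  move/eqP; rewrite mulf_eq0 => /orP [|/eqP //].
  rewrite !mul1r pval2 -intrB intr_eq0 => /eqP H; exfalso.
  rewrite Hm in H; lia.
have HB : forall q, q != eps_odd half eps k -> coef (f (BG k)) (BG q) = 0.
  move=> q Hq.
  have := Hhom [:: (1, BL 0)] [:: (1, BG k)] (BG q).
  rewrite cf_apply /brv /= !big_cons big_nil add0r HA mulr0 !addr0.
  rewrite (@brv_eqv_l C half lam _ ([:: (eps%:~R * alpha ^ 0, BL (eps * 0));
       (0%:~R * alpha ^ 0 * beta, BI (eps * 0))])); last first.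
    by move=> b; rewrite app1 HL.
  rewrite cf_brv !big_cons big_nil /= mulr0z !mul0r addr0 mulr0 expr0z mulr1.
  have E2 : \sum_(t <- apply f [:: (1, BG k)]) t.1 * coef (br half lam (BL 0) t.2) (BG q)
      = coef (br half lam (BL 0) (BG q)) (BG q) * coef (f (BG k)) (BG q).
    rewrite (sum_supp (G := fun c => coef (br half lam (BL 0) c) (BG q)) (S := [:: BG q])) //.
    - by rewrite big_cons big_nil addr0 app1.
    - by move=> a Ha'; apply: brL_supp; rewrite subr0.
  rewrite E2 !cf_cons cf_nil /= !add0r eqxx /= !addr0 mulr0z mul0r sub0r.
  rewrite !mul1r ?mulr1 !mulNr mulrN => /eqP; rewrite eqr_opp => /eqP E.
  case: (eqVneq (coef (f (BG k)) (BG q)) 0) => // anz; exfalso; move/negP: Hq; apply.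
  have E3 : pval C half k = eps%:~R * pval C half q.
    by apply: (mulIf anz); rewrite E mulrA.
  have : (2 * k + (half : nat)%:Z)%:~R = (eps * (2 * q + (half : nat)%:Z))%:~R :> C.
    by rewrite -pval2 E3 intrM -pval2 mulrCA.
  move/eqP; rewrite eqr_int => /eqP E4.
  rewrite /eps_odd; case: Heps => Ee; rewrite Ee in E4 *;
    [rewrite eqxx | rewrite (_ : (-1 == 1 :> int) = false) //]; apply/eqP; lia.
have Hmap : forall b, coef [seq (t.1, BH t.2) | t <- [seq ((if t.2 is BH _ then t.1 else 0), idx t.2) | t <- f (BG k)]] b = \sum_(t <- f (BG k)) (if BH (idx t.2) == b then (if t.2 is BH _ then t.1 else 0) else 0).
  by move=> b; rewrite /coef !big_map.
exists (coef (f (BG k)) (BG (eps_odd half eps k))),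
  [seq ((if t.2 is BH _ then t.1 else 0), idx t.2) | t <- f (BG k)].
move=> b; rewrite cf_cons Hmap.
case: b => n.
- by rewrite Hpar // big1 ?addr0.
- by rewrite Hpar // big1 ?addr0.
- rewrite big1 ?addr0 //.
  case: eqP => /= [[<-]|ne] //; apply: HB; apply/eqP => E; apply: ne; by rewrite E.
- rewrite /= ?add0r.
  rewrite /coef; apply: eq_bigr => [[v t]] _ /=.
  by case: t => i /=; rewrite ?if_same.
Qed.
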